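(* Let $X$ and $Y$ be complete orthomodular lattices. Then (i) the set $\mathrm{Lin}(X,Y)$ of all linear maps $X\to Y$, ordered pointwise, is a complete lattice; and (ii) $\mathrm{Lin}(X)=\mathrm{Lin}(X,X)$, with composition as multiplication, the identity map as unit, pointwise joins, and involution $f\mapsto f^\star$, is a unital involutive quantale.
   Context: An ortholattice is a bounded lattice with an involutive order-reversing map $x\mapsto x^\perp$ satisfying $x\wedge x^\perp=0$; it is orthomodular if $x\le y$ implies $y=x\vee(x^\perp\wedge y)$. Write $x\perp y$ iff $x\le y^\perp$. A map $f\colon X\to Y$ between complete orthomodular lattices is linear if there is $h\colon Y\to X$ with $f(x)\perp y \iff x\perp h(y)$ for all $x,y$; such $h$ is unique, denoted $f^\star$. A quantale is a complete lattice $Q$ with an associative multiplication distributing over arbitrary joins on both sides; it is unital if it has $e$ with $e\cdot a=a=a\cdot e$ for all $a$; it is involutive if equipped with a semigroup involution $*$ (i.e. $a^{**}=a$, $(ab)^*=b^*a^*$) preserving arbitrary joins. *)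

(* Defs.v *)
Definition is_lub {T : Type} (le : T -> T -> Prop) (S : T -> Prop) (s : T) : Prop :=
  (forall x, S x -> le x s) /\ (forall z, (forall x, S x -> le x z) -> le s z).

Definition is_partial_order {T : Type} (le : T -> T -> Prop) : Prop :=
  (forall x, le x x) /\
  (forall x y z, le x y -> le y z -> le x z) /\
  (forall x y, le x y -> le y x -> x = y).

Definition is_complete_lattice {T : Type} (le : T -> T -> Prop) : Prop :=
  is_partial_order le /\ forall S : T -> Prop, exists s, is_lub le S s.

Record COLat := {
  car :> Type;
  le : car -> car -> Prop;
  sup : (car -> Prop) -> car;
  oc : car -> car
}.

Section Derived.
Variable L : COLat.
Definition bot : car L := sup L (fun _ => False).
Definition top : car L := sup L (fun _ => True).
Definition join2 (x y : car L) : car L := sup L (fun z => z = x \/ z = y).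
Definition inf (S : car L -> Prop) : car L :=
  sup L (fun z => forall x, S x -> le L z x).
Definition meet2 (x y : car L) : car L := inf (fun z => z = x \/ z = y).
Definition perp (x y : car L) : Prop := le L x (oc L y).
End Derived.

Definition is_COML (L : COLat) : Prop :=
  is_partial_order (le L) /\
  (forall S, is_lub (le L) S (sup L S)) /\
  (forall x, oc L (oc L x) = x) /\
  (forall x y, le L x y -> le L (oc L y) (oc L x)) /\
  (forall x, meet2 L x (oc L x) = bot L) /\
  (forall x y, le L x y -> y = join2 L x (meet2 L (oc L x) y)).

Definition linear (X Y : COLat) (f : car X -> car Y) : Prop :=
  exists h : car Y -> car X, forall x y, perp Y (f x) y <-> perp X x (h y).

Definition Lin (X Y : COLat) : Type := { f : car X -> car Y | linear X Y f }.

Definition lin_le (X Y : COLat) (f g : Lin X Y) : Prop :=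
  forall x, le Y (proj1_sig f x) (proj1_sig g x).

Definition is_quantale {Q : Type} (le : Q -> Q -> Prop) (mul : Q -> Q -> Q) : Prop :=
  is_complete_lattice le /\
  (forall a b c, mul a (mul b c) = mul (mul a b) c) /\
  (forall a S s, is_lub le S s ->
     is_lub le (fun t => exists u, S u /\ t = mul a u) (mul a s) /\
     is_lub le (fun t => exists u, S u /\ t = mul u a) (mul s a)).

Definition is_unital_quantale {Q : Type} (le : Q -> Q -> Prop) (mul : Q -> Q -> Q)
  (e : Q) : Prop :=
  is_quantale le mul /\ (forall a, mul e a = a /\ mul a e = a).

Definition is_unital_involutive_quantale {Q : Type} (le : Q -> Q -> Prop)
  (mul : Q -> Q -> Q) (e : Q) (star : Q -> Q) : Prop :=
  is_unital_quantale le mul e /\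
  (forall a, star (star a) = a) /\
  (forall a b, star (mul a b) = mul (star b) (star a)) /\
  (forall S s, is_lub le S s -> is_lub le (fun t => exists u, S u /\ t = star u) (star s)).

(* Main.v *)
Require Import Defs.
From Stdlib Require Import FunctionalExtensionality PropExtensionality ProofIrrelevance.

Lemma c_refl (L : COLat) (H : is_COML L) x : le L x x.
Proof. destruct H as [[r _] _]; apply r. Qed.
Lemma c_trans (L : COLat) (H : is_COML L) x y z : le L x y -> le L y z -> le L x z.
Proof. destruct H as [[_ [t _]] _]; apply t. Qed.
Lemma c_anti (L : COLat) (H : is_COML L) x y : le L x y -> le L y x -> x = y.
Proof. destruct H as [[_ [_ a]] _]; apply a. Qed.
Lemma c_ub (L : COLat) (H : is_COML L) (S : car L -> Prop) x : S x -> le L x (sup L S).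
Proof. destruct H as [_ [s _]]; apply (proj1 (s S)). Qed.
Lemma c_least (L : COLat) (H : is_COML L) (S : car L -> Prop) z :
  (forall x, S x -> le L x z) -> le L (sup L S) z.
Proof. destruct H as [_ [s _]]; apply (proj2 (s S)). Qed.
Lemma c_occ (L : COLat) (H : is_COML L) x : oc L (oc L x) = x.
Proof. destruct H as [_ [_ [o _]]]; apply o. Qed.
Lemma c_ocanti (L : COLat) (H : is_COML L) x y : le L x y -> le L (oc L y) (oc L x).
Proof. destruct H as [_ [_ [_ [o _]]]]; apply o. Qed.

Lemma perp_sym (L : COLat) (H : is_COML L) x y : perp L x y -> perp L y x.
Proof. unfold perp; intro h. rewrite <- (c_occ L H y) at 1. now apply c_ocanti. Qed.
Lemma perp_symE (L : COLat) (H : is_COML L) x y : perp L x y <-> perp L y x.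
Proof. split; apply perp_sym; auto. Qed.
Lemma perp_sup_l (L : COLat) (H : is_COML L) S y :
  perp L (sup L S) y <-> forall x, S x -> perp L x y.
Proof. unfold perp; split.
 - intros h x hx. eapply c_trans; eauto. now apply c_ub.
 - intros h. now apply c_least. Qed.
Lemma perp_sup_r (L : COLat) (H : is_COML L) S y :
  perp L y (sup L S) <-> forall x, S x -> perp L y x.
Proof. rewrite perp_symE, perp_sup_l by auto. split; intros h x hx; apply perp_sym, h; auto. Qed.
Lemma perp_le_l (L : COLat) (H : is_COML L) x x' y : le L x x' -> perp L x' y -> perp L x y.
Proof. unfold perp; intros; eapply c_trans; eauto. Qed.
Lemma perp_uniq_r (L : COLat) (H : is_COML L) a b :
  (forall x, perp L x a <-> perp L x b) -> a = b.
Proof. intro h. unfold perp in h.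
  assert (oc L a = oc L b).
  { apply (c_anti L H); apply h; apply c_refl; auto. }
  rewrite <- (c_occ L H a), <- (c_occ L H b). now f_equal. Qed.
Lemma perp_uniq_l (L : COLat) (H : is_COML L) a b :
  (forall y, perp L a y <-> perp L b y) -> a = b.
Proof. intro h. apply (perp_uniq_r L H). intro x. rewrite !(perp_symE L H x). apply h. Qed.

Definition adj (X Y : COLat) (f : car X -> car Y) (y : car Y) : car X :=
  oc X (sup X (fun x => perp Y (f x) y)).

Lemma adj_spec (X Y : COLat) (HX : is_COML X) (HY : is_COML Y) f :
  linear X Y f -> forall x y, perp Y (f x) y <-> perp X x (adj X Y f y).
Proof. intros [h hh] x y. unfold adj, perp at 2. rewrite (c_occ X HX). split.
 - intro; now apply c_ub.
 - intro hx. apply hh. eapply (perp_le_l X HX); eauto.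
   apply (perp_sup_l X HX). intros a ha. now apply hh. Qed.

Lemma lin_eq (X Y : COLat) (f g : Lin X Y) :
  (forall x, proj1_sig f x = proj1_sig g x) -> f = g.
Proof. destruct f as [f pf], g as [g pg]; simpl; intro h.
  assert (f = g) by (now apply functional_extensionality). subst.
  f_equal; apply proof_irrelevance. Qed.

Lemma sup_ext (L : COLat) (A B : car L -> Prop) : (forall z, A z <-> B z) -> sup L A = sup L B.
Proof. intro h. f_equal. apply functional_extensionality; intro z.
  apply propositional_extensionality, h. Qed.

Lemma lin_sup (X Y : COLat) (HX : is_COML X) (HY : is_COML Y) f (Z : car X -> Prop) :
  linear X Y f -> f (sup X Z) = sup Y (fun y => exists z, Z z /\ y = f z).
Proof. intro lf. apply (perp_uniq_l Y HY). intro y.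
  rewrite (adj_spec X Y HX HY f lf), (perp_sup_l X HX), (perp_sup_l Y HY).
  split.
  - intros h w [z [hz ->]]. apply (adj_spec X Y HX HY f lf); auto.
  - intros h z hz. apply (adj_spec X Y HX HY f lf). apply h; eauto. Qed.

Definition jnf (X Y : COLat) (S : Lin X Y -> Prop) (x : car X) : car Y :=
  sup Y (fun y => exists f, S f /\ y = proj1_sig f x).

Lemma jn_lin (X Y : COLat) (HX : is_COML X) (HY : is_COML Y) S : linear X Y (jnf X Y S).
Proof. exists (fun y => sup X (fun z => exists f : Lin X Y, S f /\ z = adj X Y (proj1_sig f) y)).
  intros x y. unfold jnf. rewrite (perp_sup_l Y HY), (perp_sup_r X HX). split.
  - intros h z [f [hf ->]]. apply (adj_spec X Y HX HY _ (proj2_sig f)). apply h; eauto.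
  - intros h w [f [hf ->]]. apply (adj_spec X Y HX HY _ (proj2_sig f)). apply h; eauto. Qed.

Definition jn (X Y : COLat) (HX : is_COML X) (HY : is_COML Y) S : Lin X Y :=
  exist _ (jnf X Y S) (jn_lin X Y HX HY S).

Lemma jn_lub (X Y : COLat) (HX : is_COML X) (HY : is_COML Y) S :
  is_lub (@lin_le X Y) S (jn X Y HX HY S).
Proof. split.
  - intros f hf x. simpl. unfold jnf. apply (c_ub Y HY). eauto.
  - intros z hz x. simpl. unfold jnf. apply (c_least Y HY). intros w [f [hf ->]]. now apply hz. Qed.

Lemma lin_po (X Y : COLat) (HY : is_COML Y) : is_partial_order (@lin_le X Y).
Proof. split; [|split].
  - intros f x. apply (c_refl Y HY).
  - intros f g h a b x. eapply (c_trans Y HY); eauto.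
  - intros f g a b. apply lin_eq. intro x. apply (c_anti Y HY); auto. Qed.

Lemma lub_char (X Y : COLat) (HX : is_COML X) (HY : is_COML Y) S s :
  is_lub (@lin_le X Y) S s <-> forall x, proj1_sig s x = jnf X Y S x.
Proof. split.
  - intros hs. assert (s = jn X Y HX HY S) as ->.
    { destruct (jn_lub X Y HX HY S) as [a b]. destruct hs as [c d].
      apply (lin_po X Y HY); auto. }
    reflexivity.
  - intro h. assert (s = jn X Y HX HY S) as -> by (apply lin_eq; exact h).
    apply jn_lub. Qed.

Lemma comp_lin (X : COLat) (HX : is_COML X) (f g : Lin X X) :
  linear X X (fun x => proj1_sig f (proj1_sig g x)).
Proof. exists (fun y => adj X X (proj1_sig g) (adj X X (proj1_sig f) y)). intros x y.
  rewrite (adj_spec X X HX HX _ (proj2_sig f)), (adj_spec X X HX HX _ (proj2_sig g)). tauto. Qed.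

Lemma id_lin (X : COLat) : linear X X (fun x => x).
Proof. exists (fun y => y). tauto. Qed.

Lemma adj_lin (X : COLat) (HX : is_COML X) (f : Lin X X) : linear X X (adj X X (proj1_sig f)).
Proof. exists (proj1_sig f). intros x y.
  rewrite (perp_symE X HX), <- (adj_spec X X HX HX _ (proj2_sig f)), (perp_symE X HX). tauto. Qed.

Theorem mainTheorem3 (X Y : COLat) (HX : is_COML X) (HY : is_COML Y) :
  (* (i) Lin(X,Y), ordered pointwise, is a complete lattice *)
  is_complete_lattice (@lin_le X Y) /\
  (* (ii) Lin(X) with composition, identity, pointwise joins and f |-> f^star
     is a unital involutive quantale *)
  exists (mul : Lin X X -> Lin X X -> Lin X X) (e : Lin X X)
         (star : Lin X X -> Lin X X),
    (forall f g x, proj1_sig (mul f g) x = proj1_sig f (proj1_sig g x)) /\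
    (forall x, proj1_sig e x = x) /\
    (forall f x y, perp X (proj1_sig f x) y <-> perp X x (proj1_sig (star f) y)) /\
    (forall (S : Lin X X -> Prop) (s : Lin X X),
        is_lub (@lin_le X X) S s <->
        (forall x, proj1_sig s x = sup X (fun y => exists f, S f /\ y = proj1_sig f x))) /\
    is_unital_involutive_quantale (@lin_le X X) mul e star.
Proof.
  split.
  { split; [apply lin_po; auto|]. intro S. exists (jn X Y HX HY S). apply jn_lub. }
  exists (fun f g => exist _ _ (comp_lin X HX f g)).
  exists (exist _ _ (id_lin X)).
  exists (fun f => exist _ _ (adj_lin X HX f)).
  split; [reflexivity|]. split; [reflexivity|].
  split; [intros f x y; apply (adj_spec X X HX HX _ (proj2_sig f))|].
  split; [intros S s; apply (lub_char X X HX HX)|].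
  split; [split; [split|]|split; [|split]].
  - split; [apply lin_po; auto|]. intro S. exists (jn X X HX HX S). apply jn_lub.
  - split; [intros; apply lin_eq; reflexivity|].
    intros a S s hs. rewrite (lub_char X X HX HX) in hs. split.
    + apply (lub_char X X HX HX). intro x. simpl. rewrite hs. unfold jnf.
      rewrite (lin_sup X X HX HX _ _ (proj2_sig a)). apply sup_ext. intro z. split.
      * intros [w [[f [hf ->]] ->]]. exists (exist _ _ (comp_lin X HX a f)). split; eauto.
      * intros [t [[u [hu ->]] ->]]. simpl. eauto.
    + apply (lub_char X X HX HX). intro x. simpl. rewrite hs. unfold jnf.
      apply sup_ext. intro z. split.
      * intros [f [hf ->]]. exists (exist _ _ (comp_lin X HX f a)). split; eauto.
      * intros [t [[u [hu ->]] ->]]. simpl. eauto.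
  - intro a; split; apply lin_eq; reflexivity.
  - intro a. apply lin_eq. intro y. simpl. apply (perp_uniq_r X HX). intro x.
    rewrite <- (adj_spec X X HX HX _ (adj_lin X HX a)), (perp_symE X HX),
      <- (adj_spec X X HX HX _ (proj2_sig a)), (perp_symE X HX). tauto.
  - intros a b. apply lin_eq. intro y. simpl. apply (perp_uniq_r X HX). intro x.
    rewrite <- (adj_spec X X HX HX _ (comp_lin X HX a b)),
      <- (adj_spec X X HX HX _ (proj2_sig b)), <- (adj_spec X X HX HX _ (proj2_sig a)). tauto.
  - intros S s hs. rewrite (lub_char X X HX HX) in hs. apply (lub_char X X HX HX).
    intro y. simpl. unfold jnf. apply (perp_uniq_r X HX). intro x.
    rewrite <- (adj_spec X X HX HX _ (proj2_sig s)), hs. unfold jnf.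
    rewrite (perp_sup_l X HX), (perp_sup_r X HX). split.
    + intros h w [t [[u [hu ->]] ->]]. simpl.
      apply (adj_spec X X HX HX _ (proj2_sig u)). apply h; eauto.
    + intros h w [f [hf ->]]. apply (adj_spec X X HX HX _ (proj2_sig f)).
      apply (h (adj X X (proj1_sig f) y)). exists (exist _ _ (adj_lin X HX f)). eauto.
Qed.
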